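(* Let $k\in\{0,1,-1\}$ and let $a_1,a_2$ be real constants. Consider the system of ordinary differential equations for real functions $\hat H(t)=(H_1,H_2,H_3)^T$, $\hat h(t)=(h_1,h_2,h_3)^T$: $$\frac{d\hat H}{dt}=\hat H\times\hat\Omega+\hat h\times\hat a,\qquad \frac{d\hat h}{dt}=\hat h\times\hat\Omega+k\,(\hat H\times\hat a),$$ where $\times$ is the vector product in $\mathbb{R}^3$, $\hat a=(a_1,a_2,0)^T$ and $\hat\Omega=(H_1/2,\,H_2/2,\,H_3)^T$ (i.e. $c_1=c_2=2$, $c_3=1$, $a_3=0$). Put $z=\tfrac12(H_1+iH_2)$, $w=h_1+ih_2$, $a=a_1+ia_2$. Then along every solution the function $|z^2-a(w-ka)|^2$ is constant.
   Context: This is the Hamiltonian system on the Lie algebra of $E_3$ ($k=0$), $\mathfrak{so}_4$ ($k=1$) or $\mathfrak{so}(1,3)$ ($k=-1$) generated by $H=\frac12\big(\frac{H_1^2}{c_1}+\frac{H_2^2}{c_2}+\frac{H_3^2}{c_3}\big)+a_1h_1+a_2h_2+a_3h_3$ with $c_1=c_2=2c_3$, $a_3=0$, normalized so that $c_3=1$. *)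

(* Defs.v *)
From Stdlib Require Import Reals.
From Coquelicot Require Export Coquelicot.
Open Scope R_scope.

Record V3 := mkV3 { x1 : R; x2 : R; x3 : R }.

Definition vadd (u v : V3) : V3 := mkV3 (x1 u + x1 v) (x2 u + x2 v) (x3 u + x3 v).
Definition vscale (c : R) (u : V3) : V3 := mkV3 (c * x1 u) (c * x2 u) (c * x3 u).

Definition cross (u v : V3) : V3 :=
  mkV3 (x2 u * x3 v - x3 u * x2 v)
       (x3 u * x1 v - x1 u * x3 v)
       (x1 u * x2 v - x2 u * x1 v).

Definition is_derive_V3 (f : R -> V3) (t : R) (v : V3) : Prop :=
  is_derive (fun s => x1 (f s)) t (x1 v) /\
  is_derive (fun s => x2 (f s)) t (x2 v) /\
  is_derive (fun s => x3 (f s)) t (x3 v).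

Definition Omega (H : V3) : V3 := mkV3 (x1 H / 2) (x2 H / 2) (x3 H).

Definition is_solution (k a1 a2 : R) (lo hi : Rbar) (H h : R -> V3) : Prop :=
  let ahat := mkV3 a1 a2 0 in
  forall t : R, Rbar_lt lo t -> Rbar_lt t hi ->
    is_derive_V3 H t (vadd (cross (H t) (Omega (H t))) (cross (h t) ahat)) /\
    is_derive_V3 h t (vadd (cross (h t) (Omega (H t))) (vscale k (cross (H t) ahat))).

Definition invariant (k a1 a2 : R) (H h : V3) : R :=
  let z : C := (x1 H / 2, x2 H / 2) in
  let w : C := (x1 h, x2 h) in
  let a : C := (a1, a2) in
  (Cmod (z * z - a * (w - RtoC k * a))) ^ 2.

(* Main.v *)
Require Import Defs.
From Stdlib Require Import Reals Lra.
From Coquelicot Require Import Coquelicot.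
Open Scope R_scope.

Definition Ufun (k a1 a2 X Y p1 p2 : R) : R :=
  X*X/4 - Y*Y/4 - (a1*(p1 - k*a1) - a2*(p2 - k*a2)).
Definition Vfun (k a1 a2 X Y p1 p2 : R) : R :=
  X*Y/2 - (a1*(p2 - k*a2) + a2*(p1 - k*a1)).

Lemma inv_eq k a1 a2 Hv hv :
  invariant k a1 a2 Hv hv =
  Ufun k a1 a2 (x1 Hv) (x2 Hv) (x1 hv) (x2 hv) ^ 2 +
  Vfun k a1 a2 (x1 Hv) (x2 Hv) (x1 hv) (x2 hv) ^ 2.
Proof.
  unfold invariant. rewrite Cmod2_alt. unfold Ufun, Vfun.
  simpl. unfold RtoC; simpl. field.
Qed.

Lemma in_int (lo hi : Rbar) (t s x : R) :
  Rbar_lt lo t -> Rbar_lt t hi -> Rbar_lt lo s -> Rbar_lt s hi ->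
  Rmin t s <= x <= Rmax t s -> Rbar_lt lo x /\ Rbar_lt x hi.
Proof.
  intros H1 H2 H3 H4 [H5 H6].
  unfold Rmin, Rmax in *.
  destruct (Rle_dec t s);
    split; destruct lo, hi; simpl in *; try lra; auto.
Qed.

Theorem mainTheorem1 (k a1 a2 : R) (lo hi : Rbar) (H h : R -> V3) :
  (k = 0 \/ k = 1 \/ k = -1) ->
  is_solution k a1 a2 lo hi H h ->
  forall t s : R, Rbar_lt lo t -> Rbar_lt t hi -> Rbar_lt lo s -> Rbar_lt s hi ->
    invariant k a1 a2 (H t) (h t) = invariant k a1 a2 (H s) (h s).
Proof.
  intros Hk Hsol t s Ht1 Ht2 Hs1 Hs2.
  rewrite !inv_eq.
  pose (X := fun u => x1 (H u)). pose (Y := fun u => x2 (H u)).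
  pose (P := fun u => x1 (h u)). pose (Q := fun u => x2 (h u)).
  pose (f := fun u => (X u * X u / 4 - Y u * Y u / 4 -
      (a1 * (P u - k * a1) - a2 * (Q u - k * a2))) ^ 2 +
     (X u * Y u / 2 - (a1 * (Q u - k * a2) + a2 * (P u - k * a1))) ^ 2).
  change (f t = f s).
  assert (D : forall x : R, Rbar_lt lo x -> Rbar_lt x hi -> is_derive f x 0).
  { intros x Hx1 Hx2.
    destruct (Hsol x Hx1 Hx2) as [[dH1 [dH2 dH3]] [dh1 [dh2 dh3]]].
    simpl in dH1, dH2, dH3, dh1, dh2, dh3.
    unfold f.
    auto_derive.
    - repeat split; eexists; eauto.
    - unfold X, Y, P, Q; cbv beta.
      rewrite (is_derive_unique _ _ _ dH1), (is_derive_unique _ _ _ dH2),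
        (is_derive_unique _ _ _ dh1), (is_derive_unique _ _ _ dh2).
      field. }
  destruct (MVT_gen f t s (fun _ => 0)) as [c [_ Hc]].
  - intros x Hx. destruct (in_int lo hi t s x Ht1 Ht2 Hs1 Hs2) as [A B]; [lra|].
    apply D; auto.
  - intros x Hx. destruct (in_int lo hi t s x Ht1 Ht2 Hs1 Hs2 Hx) as [A B].
    apply continuity_pt_filterlim. apply (ex_derive_continuous f x).
    eexists; apply D; auto.
  - rewrite Rmult_0_l in Hc. lra.
Qed.
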